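(* Let $0\to(M,\alpha_M)\to(K,\alpha_K)\xrightarrow{\pi}(L,\alpha_L)\to0$ and $0\to(N,\alpha_N)\to(F,\alpha_F)\xrightarrow{\rho}(K,\alpha_K)\to0$ be central extensions of Hom-Leibniz $n$-algebras with $(K,\alpha_K)$ perfect. Then $0\to P=\ker(\pi\circ\rho)\to(F,\alpha_F)\xrightarrow{\pi\circ\rho}(L,\alpha_L)\to0$ is an $\alpha$-central extension. Moreover, if $\pi$ is a universal $\alpha$-central extension, then $\rho$ splits, i.e. there is a homomorphism $\sigma:(K,\alpha_K)\to(F,\alpha_F)$ with $\rho\circ\sigma=\mathrm{id}_K$.
   Context: Fix a field $\mathbb K$ and $n\ge2$. A (multiplicative) Hom-Leibniz $n$-algebra is a $\mathbb K$-vector space $L$ with an $n$-linear bracket and a linear map $\alpha_L$ preserving the bracket, satisfying $[[x_1,\dots,x_n],\alpha_L(y_1),\dots,\alpha_L(y_{n-1})]=\sum_{i=1}^n[\alpha_L(x_1),\dots,[x_i,y_1,\dots,y_{n-1}],\dots,\alpha_L(x_n)]$. Homomorphisms preserve brackets and commute with twisting maps. Perfect: $K=[K,\dots,K]$. The center $Z(K)$ consists of $x$ with every bracket having $x$ in some position equal to $0$. An extension of $L$ is a surjective homomorphism $\pi:K\to L$ with kernel $M$; central if $M\subseteq Z(K)$; $\alpha$-central if every bracket with $n-1$ entries in $\alpha_K(M)$ and the remaining entry (any position) in $K$ vanishes. A central extension $\pi:K\to L$ is universal $\alpha$-central if for every $\alpha$-central extension $\pi':K'\to L$ there is a unique homomorphism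 $h:K\to K'$ with $\pi'\circ h=\pi$. *)

(* Defs.v *)
From HB Require Import structures.
From mathcomp Require Import all_boot all_order all_algebra.
Set Implicit Arguments. Unset Strict Implicit. Unset Printing Implicit Defensive.
Import GRing.Theory.
Local Open Scope ring_scope.

Definition is_lin (R : fieldType) (U V : lmodType R) (f : U -> V) : Prop :=
  forall (a : R) (u v : U), f (a *: u + v) = a *: f u + f v.

Definition upd (T : Type) (n : nat) (x : 'I_n -> T) (i : 'I_n) (v : T) : 'I_n -> T :=
  fun j => if j == i then v else x j.

Definition multilinear (R : fieldType) (V : lmodType R) (n : nat)
  (br : ('I_n -> V) -> V) : Prop :=
  forall (x : 'I_n -> V) (i : 'I_n), is_lin (fun v : V => br (upd x i v)).

(* The (n-1)-tuple (y_1,...,y_{n-1}) is encoded as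
   y : 'I_n -> V using positions 1..n-1 (y at position 0 is ignored):
   [[x_1..x_n], a(y_1),..,a(y_{n-1})]
     = sum_i [a(x_1),..,[x_i,y_1,..,y_{n-1}],..,a(x_n)]. *)
Definition hom_leibniz_id (R : fieldType) (V : lmodType R) (n : nat)
  (br : ('I_n -> V) -> V) (alpha : V -> V) : Prop :=
  forall (x y : 'I_n -> V),
    br (fun j : 'I_n => if nat_of_ord j == 0%N then br x else alpha (y j))
    = \sum_(i < n)
        br (fun j : 'I_n =>
              if j == i
              then br (fun k : 'I_n => if nat_of_ord k == 0%N then x i else y k)
              else alpha (x j)).

Record hlalg (R : fieldType) (n : nat) := HLAlg {
  carrier : lmodType R;
  bracket : ('I_n -> carrier) -> carrier;
  twist : carrier -> carrier;
  bracket_multilinear : multilinear bracket;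
  twist_linear : is_lin twist;
  twist_multiplicative : forall x : 'I_n -> carrier, twist (bracket x) = bracket (fun j => twist (x j));
  hom_leibniz : hom_leibniz_id bracket twist
}.
Coercion carrier : hlalg >-> lmodType.

Definition is_hom (R : fieldType) (n : nat) (A B : hlalg R n) (f : A -> B) : Prop :=
  [/\ is_lin f,
      forall x : 'I_n -> A, f (bracket x) = bracket (fun j => f (x j))
    & forall a : A, f (twist a) = twist (f a)].

Definition perfect (R : fieldType) (n : nat) (A : hlalg R n) : Prop :=
  forall a : A, exists s : seq (R * ('I_n -> A)),
    a = \sum_(p <- s) p.1 *: bracket p.2.

Definition in_center (R : fieldType) (n : nat) (A : hlalg R n) (a : A) : Prop :=
  forall (x : 'I_n -> A) (i : 'I_n), bracket (upd x i a) = 0.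

Definition extension (R : fieldType) (n : nat) (A B : hlalg R n) (f : A -> B) : Prop :=
  is_hom f /\ (forall b : B, exists a : A, f a = b).

Definition central_ext (R : fieldType) (n : nat) (A B : hlalg R n) (f : A -> B) : Prop :=
  extension f /\ (forall a : A, f a = 0 -> in_center a).

Definition alpha_central_ext (R : fieldType) (n : nat) (A B : hlalg R n) (f : A -> B) : Prop :=
  extension f /\
  (forall (x : 'I_n -> A) (i : 'I_n),
     (forall j : 'I_n, j != i -> exists m : A, f m = 0 /\ x j = twist m) ->
     bracket x = 0).

Definition universal_alpha_central_ext (R : fieldType) (n : nat) (A B : hlalg R n)
  (f : A -> B) : Prop :=
  central_ext f /\
  forall (C : hlalg R n) (g : C -> B), alpha_central_ext g ->
    exists h : A -> C,
      [/\ is_hom h, (forall a, g (h a) = f a) &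
          forall h' : A -> C, is_hom h' -> (forall a, g (h' a) = f a) ->
            forall a, h' a = h a].

(* Main.v *)
Require Import Defs.
From mathcomp Require Import all_boot all_order all_algebra.
From Stdlib Require Import FunctionalExtensionality ClassicalEpsilon.
Set Implicit Arguments. Unset Strict Implicit. Unset Printing Implicit Defensive.
Import GRing.Theory.
Local Open Scope ring_scope.

Section H.
Variables (R : fieldType).

Lemma lin_add (U V : lmodType R) (f : U -> V) : is_lin f ->
  forall u v, f (u + v) = f u + f v.
Proof. by move=> hf u v; have := hf 1 u v; rewrite !scale1r. Qed.

Lemma lin0 (U V : lmodType R) (f : U -> V) : is_lin f -> f 0 = 0.
Proof.
move=> hf; have := hf (-1) 0 0; rewrite scaler0 addr0 scaleN1r.
by move=> e; rewrite {1}e addNr.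
Qed.

Lemma lin_sum (U V : lmodType R) (f : U -> V) (T : Type) (G : T -> U)
  (s : seq (R * T)) : is_lin f ->
  f (\sum_(p <- s) p.1 *: G p.2) = \sum_(p <- s) p.1 *: f (G p.2).
Proof.
move=> hf; elim: s => [|p s IH]; first by rewrite !big_nil lin0.
by rewrite !big_cons hf IH.
Qed.

Variable n : nat.

Lemma bracket_center (A : hlalg R n) (x : 'I_n -> A) j :
  in_center (x j) -> bracket x = 0.
Proof.
move=> h; have -> : x = upd x j (x j).
  by apply: functional_extensionality => k; rewrite /upd; case: eqP => [->|].
exact: h.
Qed.

Lemma hom_comp (A B C : hlalg R n) (f : A -> B) (g : B -> C) :
  is_hom f -> is_hom g -> is_hom (fun a => g (f a)).
Proof.
move=> [f1 f2 f3] [g1 g2 g3]; split.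
- by move=> a u v; rewrite f1 g1.
- by move=> x; rewrite f2 g2.
- by move=> a; rewrite f3 g3.
Qed.

Lemma key (hn : (2 <= n)%N) (F K : hlalg R n) (rho : F -> K)
  (hrho : central_ext rho) (i : 'I_n) (m : 'I_n -> F)
  (hm : forall j, j != i -> in_center (rho (m j))) (f : 'I_n -> F) :
  bracket (upd (fun j => twist (m j)) i (bracket f)) = 0.
Proof.
have [[[r1 r2 r3] _] rc] := hrho.
have h0 : (0 < n)%N by apply: leq_trans hn.
have h1 : (1 < n)%N by [].
pose i0 : 'I_n := Ordinal h0.
pose xx := fun j : 'I_n => if j == i then f i0 else m j.
have Hl := hom_leibniz xx f.
have Nxx : in_center (bracket xx).
  apply: rc; rewrite r2.
  have [j hj] : exists j : 'I_n, j != i.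
    case: (eqVneq i i0) => [->|hi]; last by exists i0; rewrite eq_sym.
    by exists (Ordinal h1); apply/eqP => /(congr1 val).
  apply: (@bracket_center _ _ j) => /=; rewrite /xx (negbTE hj); exact: hm.
rewrite (@bracket_center _ _ i0) in Hl; last by [].
rewrite (bigD1 i) //= big1 ?addr0 in Hl; last first.
  move=> k hk; apply: (@bracket_center _ _ k); rewrite eqxx.
  apply: rc; rewrite r2; apply: (@bracket_center _ _ i0) => /=.
  by rewrite /xx (negbTE hk); exact: hm.
rewrite Hl; congr bracket; apply: functional_extensionality => j.
rewrite /upd /xx; case: eqP => // _; congr bracket.
apply: functional_extensionality => l; case: eqP => // hl.
by rewrite eqxx; congr f; apply: val_inj.
Qed.

End H.

Theorem lemma3p10 (R : fieldType) (n : nat) (hn : (2 <= n)%N)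
  (L K F : hlalg R n) (pi : K -> L) (rho : F -> K)
  (hpi : central_ext pi) (hrho : central_ext rho) (hK : perfect K) :
  alpha_central_ext (fun x : F => pi (rho x)) /\
  (universal_alpha_central_ext pi ->
     exists sigma : K -> F, is_hom sigma /\ forall k : K, rho (sigma k) = k).
Proof.
have [[hpih hpis] pic] := hpi.
have [[hrh hrs] rc] := hrho.
have [r1 r2 r3] := hrh.
have part1 : alpha_central_ext (fun x : F => pi (rho x)).
  split; first split.
  - exact: hom_comp hrh hpih.
  - move=> b; have [k <-] := hpis b; have [a <-] := hrs k; by exists a.
  move=> x i hx.
  have H' : forall j, exists m : F,
      j != i -> pi (rho m) = 0 /\ x j = twist m.
    move=> j; case: (boolP (j != i)) => hj.
      by have [m hm] := hx j hj; exists m.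
    by exists 0.
  pose m := fun j => proj1_sig (constructive_indefinite_description _ (H' j)).
  have hmS : forall j, j != i -> pi (rho (m j)) = 0 /\ x j = twist (m j).
    move=> j; exact: (proj2_sig (constructive_indefinite_description _ (H' j))).
  pose g := fun v => bracket (upd (fun j => twist (m j)) i v).
  have gl : is_lin g := bracket_multilinear _ _.
  have -> : bracket x = g (x i).
    rewrite /g; congr bracket; apply: functional_extensionality => j.
    rewrite /upd; case: eqP => [->//|/eqP hj]; exact: (hmS j hj).2.
  have hmc : forall j, j != i -> in_center (rho (m j)).
    by move=> j hj; apply: pic; exact: (hmS j hj).1.
  have [s hs] := hK (rho (x i)).
  pose lift := fun k => proj1_sig (constructive_indefinite_description _ (hrs k)).
  have liftS : forall k, rho (lift k) = k.
    move=> k; exact: (proj2_sig (constructive_indefinite_description _ (hrs k))).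
  pose G := fun q : 'I_n -> K => bracket (fun j => lift (q j)).
  pose t := \sum_(p <- s) p.1 *: G p.2.
  have gt : g t = 0.
    rewrite /t (lin_sum G s gl) big1 // => p _.
    by rewrite /g /G (key hn hrho hmc) scaler0.
  have rt : rho t = rho (x i).
    rewrite /t (lin_sum G s r1) hs; apply: eq_bigr => p _; rewrite r2; congr (_ *: _).
    by congr bracket; apply: functional_extensionality => j; rewrite liftS.
  have rz : rho (x i - t) = 0.
    by rewrite addrC -scaleN1r r1 rt scaleN1r addNr.
  have -> : x i = t + (x i - t) by rewrite addrC subrK.
  rewrite (lin_add gl) gt add0r; apply: rc; exact: rz.
split=> // [[_ hU]].
have [h [hh hh1 _]] := hU F (fun x => pi (rho x)) part1.
have piac : alpha_central_ext pi.
  split=> // x i hx.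
  have h0 : (0 < n)%N by apply: leq_trans hn.
  have h1 : (1 < n)%N by [].
  have [j hj] : exists j : 'I_n, j != i.
    case: (eqVneq i (Ordinal h0)) => [->|hi]; last by exists (Ordinal h0); rewrite eq_sym.
    by exists (Ordinal h1); apply/eqP => /(congr1 val).
  have [m [hm exj]] := hx j hj.
  apply: (@bracket_center _ _ _ _ j); rewrite exj; apply: pic.
  have [_ _ p3] := hpih; rewrite p3 hm; exact: (lin0 (@twist_linear _ _ L)).
have [h0 [hh0 hh01 hu]] := hU K pi piac.
exists h; split=> // k.
have e1 := hu (fun a => rho (h a)) (hom_comp hh hrh) hh1 k.
have e2 := hu id _ (fun a => erefl) k.
rewrite e1 -e2 //; split=> //.
Qed.
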